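(* Let $K\ge1$, $n\ge1$. Let $y_1,\dots,y_n$ be data and let $p^p_1,\dots,p^p_K$ be the predictive densities obtained by fitting $K$ models to these data; let $\tilde y_1,\dots,\tilde y_n$ be i.i.d. new draws from the data-generating distribution $Q$, with $y\sim Q$ a generic draw and $\mathrm{E}$ the expectation under $Q$ (with the fitted densities held fixed). Define the optimism $op_k=-\sum_i\log p^p_k(\tilde y_i)+\sum_i\log p^p_k(y_i)$, the weights $w^{op}_k=e^{-op_k}/\sum_j e^{-op_j}$, the overfitting ratios $m_k=\frac{\sum_i-\log p^p_k(\tilde y_i)}{\sum_i-\log p^p_k(y_i)}$ and $m=\min_k m_k$, and $$\phi_{term}=\log\frac1K\sum_k\mathrm{E}\Big[e^{\sum_i\log p^p_k(\tilde y_i)-n\mathrm{E}[\log p^p_k(y)]}\Big].$$ Assume $\sum_i-\log p^p_k(y_i)>0$ for each $k$ and $m>1$. Then for any $\delta\in(0,1]$, with probability at least $1-\delta$, simultaneously for all $w^p\in S^K$: $$n\,\mathrm{E}\Big[-\log\sum_kw^p_kp^p_k(y)\Big]\le\frac{m}{m-1}\sum_kw^p_k\log\frac{w^p_k}{w^{op}_k}-\frac{1}{m-1}\sum_kw^p_k\log w^p_k+\log K-\frac{m}{m-1}\log\sum_ke^{-op_k}-\log\delta+\phi_{term}.$$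
   Context: $S^K$ is the set of probability vectors with $K$ components; $0\log 0=0$. *)

(* Defs.v *)
From HB Require Import structures.
From mathcomp Require Import all_boot all_order all_algebra.
From mathcomp Require Import all_classical all_reals all_analysis.
Set Implicit Arguments. Unset Strict Implicit. Unset Printing Implicit Defensive.
Import Order.TTheory GRing.Theory Num.Theory.
Local Open Scope ring_scope.
Local Open Scope classical_set_scope.

Section Defs.
Context {R : realType}.

Definition simplex (K : nat) (w : 'I_K -> R) : Prop :=
  (forall k, 0 <= w k) /\ \sum_(k < K) w k = 1.

(* minimum of a family indexed by 'I_K (0 if K = 0; only used for K >= 1) *)
Definition min_ord (K : nat) (f : 'I_K -> R) : R :=
  match K return ('I_K -> R) -> R with
  | 0 => fun _ => 0
  | K'.+1 => fun f => \big[Num.min/ f ord0]_(k < K'.+1) f k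
  end f.

Definition distributed_as d d' (Om : measurableType d) (Y : measurableType d')
  (P : probability Om R) (X : Om -> Y) (Q : probability Y R) : Prop :=
  forall B, measurable B -> P (X @^-1` B) = Q B.

Definition mutually_independent d d' (Om : measurableType d) (Y : measurableType d')
  (P : probability Om R) (n : nat) (X : 'I_n -> Om -> Y) : Prop :=
  forall B : 'I_n -> set Y, (forall i, measurable (B i)) ->
    P (\bigcap_(i in [set: 'I_n]) (X i @^-1` B i)) =
    (\prod_(i < n) P (X i @^-1` B i))%E.

Definition train_loss d (Y : measurableType d) (n K : nat)
  (p : 'I_K -> Y -> R) (y : 'I_n -> Y) (k : 'I_K) : R :=
  \sum_(i < n) - ln (p k (y i)).

Definition test_loss d (Y : measurableType d) (n K : nat)
  (p : 'I_K -> Y -> R) (yt : 'I_n -> Y) (k : 'I_K) : R :=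
  \sum_(i < n) - ln (p k (yt i)).

Definition optimism d (Y : measurableType d) (n K : nat)
  (p : 'I_K -> Y -> R) (y yt : 'I_n -> Y) (k : 'I_K) : R :=
  test_loss p yt k - train_loss p y k.

Definition w_op d (Y : measurableType d) (n K : nat)
  (p : 'I_K -> Y -> R) (y yt : 'I_n -> Y) (k : 'I_K) : R :=
  expR (- optimism p y yt k) / \sum_(j < K) expR (- optimism p y yt j).

Definition m_ratio d (Y : measurableType d) (n K : nat)
  (p : 'I_K -> Y -> R) (y yt : 'I_n -> Y) (k : 'I_K) : R :=
  test_loss p yt k / train_loss p y k.

Definition m_min d (Y : measurableType d) (n K : nat)
  (p : 'I_K -> Y -> R) (y yt : 'I_n -> Y) : R :=
  min_ord (m_ratio p y yt).

(* phi_term = log (1/K) sum_k E[ exp( sum_i log p_k(~y_i) - n E[log p_k(y)] ) ],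
   as an extended real (it is +oo if an expectation is infinite). *)
Definition phi_term d d' (Om : measurableType d) (Y : measurableType d')
  (P : probability Om R) (Q : probability Y R) (n K : nat)
  (p : 'I_K -> Y -> R) (Yt : 'I_n -> Om -> Y) : \bar R :=
  lne ((K%:R^-1)%:E *
    \sum_(k < K) \int[P]_om
       (expR (\sum_(i < n) ln (p k (Yt i om))
              - n%:R * fine (\int[Q]_z (ln (p k z))%:E)))%:E)%E.

End Defs.

(* Main.v *)
Require Import Defs.
From HB Require Import structures.
From mathcomp Require Import all_boot all_order all_algebra.
From mathcomp Require Import all_classical all_reals all_analysis.
From mathcomp Require Import ring lra measurable_realfun.
Import Order.TTheory GRing.Theory Num.Theory.
Local Open Scope ring_scope.
Local Open Scope classical_set_scope.
Section Aux.
Variable R : realType.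

Lemma ln_le_sub1 (x : R) : 0 < x -> ln x <= x - 1.
Proof.
move=> x0; have := @le_ln1Dx R (x - 1); rewrite addrCA subrr addr0; apply; lra.
Qed.

Lemma wlnb_le (w b c : R) : 0 <= w -> 0 < b -> 0 < c ->
  w * (ln b - ln c) <= w * (b / c) - w.
Proof.
move=> w0 b0 c0; rewrite -ln_div ?posrE //.
have h := @ln_le_sub1 _ (divr_gt0 b0 c0).
have := ler_wpM2l w0 h; rewrite mulrBr mulr1 //.
Qed.

Lemma simplex_pos (K : nat) (w : 'I_K -> R) : simplex w -> exists k, 0 < w k.
Proof.
move=> [w0 w1].
have : \sum_(k < K) w k != 0 by rewrite w1 oner_eq0.
rewrite psumr_neq0; last by move=> i _; exact: w0.
by move=> /hasP [k _ /= wk]; exists k.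
Qed.

Lemma jensen_ln (K : nat) (w b : 'I_K -> R) : simplex w -> (forall k, 0 < b k) ->
  \sum_(k < K) w k * ln (b k) <= ln (\sum_(k < K) w k * b k).
Proof.
move=> [w0 w1] b0.
set M := \sum_(k < K) w k * b k.
have M0 : 0 < M.
  have [k wk] := @simplex_pos _ _ (conj w0 w1).
  rewrite /M (bigD1 k) //= ltr_wpDr //; first by apply: sumr_ge0 => i _; rewrite mulr_ge0 // ltW.
  by rewrite mulr_gt0.
rewrite -subr_le0 -[ln M]mul1r -w1 mulr_suml -sumrB.
apply: (@le_trans _ _ (\sum_(k < K) (w k * (b k / M) - w k))).
  by apply: ler_sum => k _; rewrite -mulrBr; apply: wlnb_le.
rewrite sumrB.
have -> : \sum_(i < K) w i * (b i / M) = 1.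
  under eq_bigr do rewrite mulrA.
  by rewrite -mulr_suml divff // gt_eqF.
by rewrite w1 subrr.
Qed.

Lemma gibbs (K : nat) (w a : 'I_K -> R) : simplex w ->
  \sum_(k < K) w k * a k - \sum_(k < K) w k * ln (w k) <= ln (\sum_(k < K) expR (a k)).
Proof.
move=> [w0 w1].
set Z := \sum_(k < K) expR (a k).
have Z0 : 0 < Z.
  have [k wk] := @simplex_pos _ _ (conj w0 w1).
  rewrite /Z (bigD1 k) //= ltr_wpDr ?expR_gt0 //.
  by apply: sumr_ge0 => i _; rewrite ltW // expR_gt0.
rewrite -subr_le0 -[ln Z]mul1r -w1 mulr_suml -!sumrB.
apply: (@le_trans _ _ (\sum_(k < K) (expR (a k) / Z - w k))).
  apply: ler_sum => k _.
  have [->|wk] := eqVneq (w k) 0.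
    by rewrite !mul0r !subr0 divr_ge0 // ltW // expR_gt0.
  have wk0 : 0 < w k by rewrite lt0r wk w0.
  have h := @wlnb_le _ _ _ (w0 k) (expR_gt0 (a k)) (mulr_gt0 wk0 Z0).
  rewrite lnM ?posrE // expRK in h.
  have e : w k * (expR (a k) / (w k * Z)) = expR (a k) / Z.
    by field; rewrite gt_eqF ?wk0 ?Z0.
  rewrite e mulrDr in h; lra.
rewrite sumrB -mulr_suml divff ?gt_eqF // w1 subrr //.
Qed.


Lemma bigmin_le_seq (I : eqType) (r : seq I) (f : I -> R) (x0 : R) k :
  k \in r -> \big[Num.min/x0]_(i <- r) f i <= f k.
Proof.
elim: r => [//|h t ih]; rewrite inE big_cons => /orP [/eqP ->|kt].
  by rewrite ge_min lexx.
by rewrite ge_min ih ?orbT.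
Qed.

Lemma min_ord_le (K : nat) (f : 'I_K -> R) k : min_ord f <= f k.
Proof.
case: K f k => [|K] f k; first by case: k.
rewrite /min_ord; apply: bigmin_le_seq; exact: mem_index_enum.
Qed.

Lemma sum_wln_wop (K : nat) (w o : 'I_K -> R) : simplex w ->
  let Z := \sum_(j < K) expR (- o j) in
  \sum_(k < K) w k * ln (w k / (expR (- o k) / Z)) =
  \sum_(k < K) w k * ln (w k) + \sum_(k < K) w k * o k + ln Z.
Proof.
move=> [w0 w1] Z.
have Z0 : 0 < Z.
  have [k wk] := @simplex_pos _ _ (conj w0 w1).
  rewrite /Z (bigD1 k) //= ltr_wpDr ?expR_gt0 //.
  by apply: sumr_ge0 => i _; rewrite ltW // expR_gt0.
rewrite -[ln Z]mul1r -w1 mulr_suml -!big_split /=.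
apply: eq_bigr => k _.
have [->|wk] := eqVneq (w k) 0; first by rewrite !mul0r !addr0.
have wk0 : 0 < w k by rewrite lt0r wk w0.
rewrite ln_div ?posrE ?divr_gt0 ?expR_gt0 // ln_div ?posrE ?expR_gt0 // expRK.
ring.
Qed.

Lemma key_alg (K : nat) (w T S : 'I_K -> R) (m Z0 : R) : simplex w ->
  (forall k, m * S k <= T k) -> 1 < m ->
  Z0 = \sum_(j < K) expR (- (T j - S j)) ->
  \sum_(k < K) w k * T k + \sum_(k < K) w k * ln (w k) <=
  m / (m - 1) * (\sum_(k < K) w k * ln (w k / (expR (- (T k - S k)) / Z0)))
  - (m - 1)^-1 * (\sum_(k < K) w k * ln (w k)) - m / (m - 1) * ln Z0.
Proof.
move=> ws hT m1 ->.
rewrite (@sum_wln_wop K w (fun k => T k - S k) ws).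
set Z := \sum_(j < K) expR (- (T j - S j)).
set A := \sum_(k < K) w k * ln (w k).
set B := \sum_(k < K) w k * (T k - S k).
set D := \sum_(k < K) w k * T k.
have hB : (m - 1) * D <= m * B.
  rewrite /D /B !mulr_sumr; apply: ler_sum => k _.
  have := hT k; have := (ws.1 k) => w0 h.
  have : 0 <= w k * (T k - m * S k) by rewrite mulr_ge0 // subr_ge0.
  nra.
have hB' : 0 <= m * B - (m - 1) * D by rewrite subr_ge0.
have hq : (m - 1) * (m - 1)^-1 = 1 by rewrite divff // gt_eqF // subr_gt0.
have q0 : 0 <= (m - 1)^-1 by rewrite invr_ge0 subr_ge0 ltW.
have h3 := mulr_ge0 q0 hB'.
have h1 : A * ((m - 1) * (m - 1)^-1) = A by rewrite hq mulr1.
have h2 : D * ((m - 1) * (m - 1)^-1) = D by rewrite hq mulr1.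
clear hq q0; move: (m - 1)^-1 h1 h2 h3 => q h1 h2 h3.
lra.
Qed.

End Aux.
Lemma le_integral_meas d (T : measurableType d) (R : realType)
  (mu : {measure set T -> \bar R}) (f g : T -> \bar R) :
  measurable_fun setT f -> measurable_fun setT g -> (forall x, (f x <= g x)%E) ->
  (\int[mu]_x f x <= \int[mu]_x g x)%E.
Proof.
move=> mf mg fg; rewrite integralE [leRHS]integralE leeB//.
- apply: ge0_le_integral => //.
  + exact: measurable_funepos.
  + exact: measurable_funepos.
  + by move=> x _; apply: (@funepos_le _ _ setT) => [? ?|]; [exact: fg|exact: in_setT].
- apply: ge0_le_integral => //.
  + exact: measurable_funeneg.
  + exact: measurable_funeneg.
  + by move=> x _; apply: (@funeneg_le _ _ setT) => [? ?|]; [exact: fg|exact: in_setT].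
Qed.
Theorem theorem3p4 (R : realType)
  (d1 d2 : measure_display) (Om : measurableType d1) (Y : measurableType d2)
  (P : probability Om R) (Q : probability Y R)
  (mu : {measure set Y -> \bar R})
  (K n : nat) (hK : (1 <= K)%N) (hn : (1 <= n)%N)
  (y : 'I_n -> Y) (p : 'I_K -> Y -> R) (Yt : 'I_n -> Om -> Y)
  (p_meas : forall k, measurable_fun setT (p k))
  (p_pos : forall k z, 0 < p k z)
  (p_dens : forall k, (\int[mu]_z (p k z)%:E = 1)%E)
  (lnp_int : forall k, Q.-integrable setT (fun z => (ln (p k z))%:E))
  (Yt_meas : forall i, measurable_fun setT (Yt i))
  (Yt_law : forall i, distributed_as P (Yt i) Q)
  (Yt_indep : mutually_independent P Yt)
  (train_pos : forall k, 0 < train_loss p y k)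
  (delta : R) (hdelta : 0 < delta <= 1) :
  exists A : set Om, measurable A /\ ((1 - delta)%:E <= P A)%E /\
    forall om, A om ->
      let yt := fun i => Yt i om in
      let m := m_min p y yt in
      1 < m ->
      forall w : 'I_K -> R, simplex w ->
        ((n%:R)%:E * \int[Q]_z (- ln (\sum_(k < K) w k * p k z))%:E
         <= (m / (m - 1) * (\sum_(k < K) w k * ln (w k / w_op p y yt k))
             - (m - 1)^-1 * (\sum_(k < K) w k * ln (w k))
             + ln K%:R
             - m / (m - 1) * ln (\sum_(k < K) expR (- optimism p y yt k))
             - ln delta)%:E
            + phi_term P Q p Yt)%E.
Proof.
have [dl0 dl1] := andP hdelta.
set ell := fun k => fine (\int[Q]_z (ln (p k z))%:E).
have ellE k : (\int[Q]_z (ln (p k z))%:E)%E = (ell k)%:E.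
  by rewrite fineK // integrable_fin_num.
have LHSb (w : 'I_K -> R) : simplex w ->
  ((n%:R)%:E * \int[Q]_z (- ln (\sum_(k < K) w k * p k z))%:E
   <= (n%:R * \sum_(k < K) w k * - ell k)%:E)%E.
  move=> ws; rewrite EFinM; apply: lee_wpmul2l; first by rewrite lee_fin.
  have fle z : ((- ln (\sum_(k < K) w k * p k z))%:E <=
      (\sum_(k < K) (- w k) * ln (p k z))%:E)%E.
    rewrite lee_fin.
    rewrite [X in _ <= X](eq_bigr (fun k => - (w k * ln (p k z)))); last by move=> k _; rewrite mulNr.
    rewrite sumrN lerN2; apply: jensen_ln => // k; exact: p_pos.
  have mf : measurable_fun setT (fun z => (- ln (\sum_(k < K) w k * p k z))%:E).
    apply/measurable_EFinP; apply: measurableT_comp => //.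
    apply: measurableT_comp => //.
    by apply: measurable_sum => k; apply: measurable_funM => //; exact: p_meas.
  have mg : measurable_fun setT (fun z => (\sum_(k < K) (- w k) * ln (p k z))%:E).
    apply/measurable_EFinP.
    by apply: measurable_sum => k; apply: measurable_funM => //; apply: measurableT_comp => //; exact: p_meas.
  apply: le_trans; first exact: (@le_integral_meas _ _ _ Q _ _ mf mg fle).
  under eq_integral do rewrite -sumEFin.
  rewrite integral_sum //; last first.
    move=> k; under eq_fun do rewrite EFinM; exact: integrableZl.
  rewrite -sumEFin lee_sum // => k _.
  under eq_integral do rewrite EFinM.
  by rewrite integralZl // ellE -EFinM mulrN mulNr.
set a := fun k om => \sum_(i < n) ln (p k (Yt i om)) - n%:R * ell k.
set S := fun om => \sum_(k < K) expR (a k om).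
have ma k : measurable_fun setT (a k).
  apply: (@measurable_funB _ _ _ _ (fun om => \sum_(i < n) ln (p k (Yt i om))) (cst (n%:R * ell k))) => //.
  apply: measurable_sum => i; apply: measurableT_comp => //.
  exact: measurableT_comp (p_meas k) (Yt_meas i).
have mS : measurable_fun setT S.
  by apply: measurable_sum => k; apply: measurableT_comp => //; exact: ma.
have mSE : measurable_fun setT (fun om => (S om)%:E) by apply/measurable_EFinP.
have S0 om : 0 < S om.
  rewrite /S (bigD1 (Ordinal hK)) //= ltr_wpDr ?expR_gt0 //.
  by apply: sumr_ge0 => i _; rewrite ltW // expR_gt0.
have phiE : phi_term P Q p Yt = lne ((K%:R^-1)%:E * \int[P]_om (S om)%:E)%E.
  rewrite /phi_term; congr (lne (_ * _))%E.
  under [RHS]eq_integral do rewrite -sumEFin.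
  rewrite ge0_integral_sum //.
  move=> k; apply/measurable_EFinP; apply: measurableT_comp => //; exact: ma.
set I := (\int[P]_om (S om)%:E)%E.
have I0 : (0 <= I)%E by apply: integral_ge0 => om _; rewrite lee_fin ltW.
have [Ioo|Ifin] := eqVneq I +oo%E.
  exists setT; split; first exact: measurableT.
  split; first by rewrite probability_setT lee_fin; lra.
  move=> om _ yt m m1 w ws.
  rewrite phiE -/I Ioo [X in lne X]muleC gt0_mulye ?lte_fin ?invr_gt0 ?ltr0n //= addey //.
  exact: leey.
set r := fine I.
have Ir : I = r%:E by rewrite fineK // ge0_fin_numE // ltey.
have r0 : 0 < r.
  rewrite lt0r fine_ge0 // andbT; apply/negP => /eqP r0.
  have : (\int[P]_(x in setT) `|(S x)%:E| = 0)%E.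
    rewrite (eq_integral (fun x => (S x)%:E)); last by move=> x _; rewrite gee0_abs // lee_fin ltW.
    by rewrite -/I Ir r0.
  move/(ae_eq_integral_abs P measurableT mSE) => [N [mN PN0 sub]].
  have NT : N = setT.
    apply/seteqP; split => // om _; apply: sub => /= h.
    by have := h Logic.I; move=> [] /eqP; rewrite gt_eqF.
  by have := probability_setT P; rewrite -NT PN0 => /eqP; rewrite eq_sym eqe oner_eq0.
have rd0 : 0 < r / delta by rewrite divr_gt0.
set A := [set om | S om <= r / delta].
set C := [set om | r / delta <= S om].
have mA : measurable A.
  have -> : A = S @^-1` `]-oo, r / delta] by apply/seteqP; split => om; rewrite /= in_itv.
  by rewrite -[_ @^-1` _]setTI; apply: mS => //; exact: measurable_itv.
have mC : measurable C.
  have -> : C = S @^-1` `[r / delta, +oo[ by apply/seteqP; split => om; rewrite /= in_itv /= andbT.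
  by rewrite -[_ @^-1` _]setTI; apply: mS => //; exact: measurable_itv.
have hC : ((r / delta)%:E * P C <= r%:E)%E.
  have := le_integral_abse P measurableT mSE rd0.
  have -> : setT `&` [set x | ((r / delta)%:E <= `|(S x)%:E|)%E] = C.
    by apply/seteqP; split => om /=; rewrite gtr0_norm ?S0 // lee_fin; case.
  rewrite (eq_integral (fun x => (S x)%:E)); last by move=> x _; rewrite gee0_abs // lee_fin ltW.
  by rewrite -/I Ir.
have PC1 : (P C <= 1)%E by apply: probability_le1.
have PC0 : (0 <= P C)%E by apply: measure_ge0.
set c := fine (P C).
have Cc : P C = c%:E by rewrite fineK // ge0_fin_numE // (le_lt_trans PC1) // ltey.
have cd : c <= delta.
  move: hC; rewrite Cc -EFinM lee_fin => hC.
  have e : r * c = (r / delta * c) * delta by field; rewrite gt_eqF.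
  have : r * c <= r * delta by rewrite e; rewrite ler_wpM2r // ltW.
  by rewrite ler_pM2l.
exists A; split => //; split.
  have hAC : (P (~` A) <= P C)%E.
    apply: le_measure; rewrite ?inE //; first exact: measurableC.
    move=> om /= h; apply: ltW; rewrite ltNge; apply/negP => h'; exact: h h'.
  move: hAC; rewrite probability_setC // Cc.
  have PA1 : (P A <= 1)%E by apply: probability_le1.
  have PA0 : (0 <= P A)%E by apply: measure_ge0.
  have -> : P A = (fine (P A))%:E by rewrite fineK // ge0_fin_numE // (le_lt_trans PA1) // ltey.
  rewrite -EFinB !lee_fin; lra.
move=> om hA yt m m1 w ws.
have K0 : 0 < K%:R :> R by rewrite ltr0n.
rewrite phiE -/I Ir -EFinM lne_EFin ?mulr_gt0 ?invr_gt0 //.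
apply: le_trans; first exact: LHSb.
rewrite -EFinD lee_fin.
have G := @gibbs R K w (fun k => a k om) ws.
have lnS : ln (S om) <= ln r - ln delta.
  rewrite -ln_div ?posrE // ler_ln ?posrE //.
have lnKr : ln (K%:R^-1 * r) = ln r - ln K%:R.
  by rewrite lnM ?posrE ?invr_gt0 // lnV ?posrE // addrC.
have hT k : m * train_loss p y k <= test_loss p yt k.
  have := @min_ord_le R K (m_ratio p y yt) k.
  by rewrite /m_ratio ler_pdivlMr.
have KA := @key_alg R K w _ _ _ _ ws hT m1 (erefl (\sum_(j < K) expR (- (test_loss p yt j - train_loss p y j)))).
have ea k : a k om = - test_loss p yt k - n%:R * ell k.
  by rewrite /test_loss sumrN opprK.
have eX : \sum_(k < K) w k * a k om =
    - (\sum_(k < K) w k * test_loss p yt k) - n%:R * (\sum_(k < K) w k * ell k).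
  rewrite (eq_bigr (fun k => - (w k * test_loss p yt k) - n%:R * (w k * ell k))); last first.
    by move=> k _; rewrite ea; ring.
  by rewrite big_split /= sumrN sumrN mulr_sumr.
have eL : n%:R * \sum_(k < K) w k * - ell k = - (n%:R * (\sum_(k < K) w k * ell k)).
  by rewrite -mulrN -sumrN; congr (_ * _); apply: eq_bigr => k _; rewrite mulrN.
rewrite eL /w_op /optimism.
move: KA G lnS lnKr eX; rewrite /S.
lra.
Qed.
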